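(* For any nonempty configuration and any integer shift $G$, the inter-level sampler (Algorithm 1) terminates with probability $1$ and returns level $\ell$ with probability exactly $W_\ell/\sum_j W_j$.
   Context: Fix an integer $b\ge 2$. There is a set $\mathcal L$ of $N$ levels, which are consecutive integers. Each level $\ell$ holds a finite (possibly empty) multiset of normalized significands, each an integer in $[2^{b-1},2^b)$. Let $z$ be the total number of stored significands over all levels; assume $z<2^b$. For each level, $SS_\ell$ is the sum of its significands (so $SS_\ell=0$ iff the level is empty); set $SS_\ell=0$ for integers $\ell\notin\mathcal L$. The level weight is $W_\ell=SS_\ell2^\ell$. For an integer global shift $G$, $A_\ell(G)=\lfloor W_\ell2^G\rfloor+1$ if $SS_\ell>0$ and $A_\ell(G)=0$ if $SS_\ell=0$; $A(G)=\sum_\ell A_\ell(G)$ and $M(G)=\sum_\ell W_\ell2^G$. The configuration is nonempty if $z\ge1$. Inter-level sampler (Algorithm 1), with shift $G$ and $A=A(G)$: it performs independent outer iterations. In an outer iteration, draw $x$ uniformly from $\{1,\dots,A\}$ and scan the levels in decreasing order starting from the largest nonempty level. At the current level $\ell$: if $x<A_\ell(G)$, return $\ell$; if $x=A_\ell(G)$, run the refinement loop for $m=1,2,\dots$: draw $r$ uniformly from $\{0,\dots,2^b-1\}$ independently, let $t=\lfloor SS_\ell 2^{\ell+G+mb}\rfloor \bmod 2^b$; if $r<t$ return $\ell$; else if $r>t$ or $\ell+G+mb\ge 0$, abandon this outer iteration and start a new one; otherwise continue with $m+1$. If $x>A_\ell(G)$, set $x\leftarrow x-A_\ell(G)$ and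 move to the next lower level. *)

(* Defs.v *)
From Stdlib Require Import ZArith Reals List Bool.
Import ListNotations.
Open Scope Z_scope.

(* A configuration: the levels are the consecutive integers
   lo, lo+1, ..., lo+N-1 with N = length lv; level (lo+i) holds the
   multiset (list) of significands  nth i lv. *)
Record config := mkConfig { lo : Z ; lv : list (list Z) }.

Definition Nlev (c : config) : nat := length (lv c).

Definition in_levels (c : config) (l : Z) : bool :=
  (lo c <=? l) && (l <? lo c + Z.of_nat (Nlev c)).

Definition SS (c : config) (l : Z) : Z :=
  if in_levels c l then fold_right Z.add 0 (nth (Z.to_nat (l - lo c)) (lv c) nil)
  else 0.

Definition zcount (c : config) : nat := fold_right plus 0%nat (map (@length Z) (lv c)).

Definition normalized (b : nat) (c : config) : Prop :=
  Forall (Forall (fun s => 2 ^ (Z.of_nat b - 1) <= s < 2 ^ Z.of_nat b)) (lv c).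

Definition floor_pow2 (s e : Z) : Z :=
  if 0 <=? e then s * 2 ^ e else s / 2 ^ (- e).

(* A_l(G) = floor(W_l 2^G) + 1 if SS_l > 0, else 0;  W_l 2^G = SS_l 2^(l+G) *)
Definition Al (G : Z) (c : config) (l : Z) : Z :=
  if 0 <? SS c l then floor_pow2 (SS c l) (l + G) + 1 else 0.

Definition Atot (G : Z) (c : config) : Z :=
  fold_right Z.add 0 (map (fun i => Al G c (lo c + Z.of_nat i)) (seq 0 (Nlev c))).

Definition top (c : config) : Z :=
  lo c + Z.of_nat (last (filter (fun i => 0 <? SS c (lo c + Z.of_nat i)) (seq 0 (Nlev c))) 0%nat).

Definition W (c : config) (l : Z) : R := (IZR (SS c l) * powerRZ 2 l)%R.

Definition sumW (c : config) : R :=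
  fold_right Rplus 0%R (map (fun i => W c (lo c + Z.of_nat i)) (seq 0 (Nlev c))).

Inductive state :=
  | Outer
  | Scan (x l : Z)
  | Refine (l m : Z)
  | Done (l : Z).

(* one step: the list of successor states, chosen uniformly at random
   (a singleton list is a deterministic step) *)
Definition step (b : nat) (G : Z) (c : config) (s : state) : list state :=
  match s with
  | Outer =>
      map (fun k => Scan (Z.of_nat k + 1) (top c)) (seq 0 (Z.to_nat (Atot G c)))
  | Scan x l =>
      if l <? lo c then [Outer]  (* ran below the lowest level: unreachable *)
      else let a := Al G c l in
           if x <? a then [Done l]
           else if x =? a then [Refine l 1]
           else [Scan (x - a) (l - 1)]
  | Refine l m =>
      let e := l + G + m * Z.of_nat b in
      let t := floor_pow2 (SS c l) e mod 2 ^ Z.of_nat b in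
      map (fun k => let r := Z.of_nat k in
                    if r <? t then Done l
                    else if (t <? r) || (0 <=? e) then Outer
                    else Refine l (m + 1))
          (seq 0 (Z.to_nat (2 ^ Z.of_nat b)))
  | Done l => [Done l]
  end.

Definition is_done (s : state) : bool :=
  match s with Done _ => true | _ => false end.

Definition done_at (l0 : Z) (s : state) : bool :=
  match s with Done l => Z.eqb l l0 | _ => false end.

Definition avg (f : state -> R) (xs : list state) : R :=
  match xs with
  | nil => 0%R
  | _ => (fold_right Rplus 0%R (map f xs) / INR (length xs))%R
  end.

(* probability that, started in state s, the algorithm has returned
   (reached a Done state) satisfying goal within n steps *)
Fixpoint reach (b : nat) (G : Z) (c : config) (goal : state -> bool)
    (n : nat) (s : state) : R :=
  if is_done s then (if goal s then 1%R else 0%R)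
  else match n with
       | O => 0%R
       | S n' => avg (reach b G c goal n') (step b G c s)
       end.

(* Main.v *)
Require Import Defs.
From Stdlib Require Import ZArith Reals List Lra Lia.
Import ListNotations.
Open Scope R_scope.

Definition rsum {A} (f : A -> R) (l : list A) : R := fold_right Rplus 0 (map f l).

Lemma rsum_app {A} (f : A -> R) l1 l2 : rsum f (l1 ++ l2) = rsum f l1 + rsum f l2.
Proof. unfold rsum; induction l1; simpl; [lra| rewrite IHl1; lra]. Qed.

Lemma rsum_ext {A} (f g : A -> R) l : (forall a, In a l -> f a = g a) -> rsum f l = rsum g l.
Proof. intros H; unfold rsum; rewrite (map_ext_in f g l H); reflexivity. Qed.

Lemma rsum_le {A} (f g : A -> R) l : (forall a, In a l -> f a <= g a) -> rsum f l <= rsum g l.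
Proof. unfold rsum; induction l; simpl; intros H; [lra|].
  specialize (IHl (fun a0 h => H a0 (or_intror h))). specialize (H a (or_introl eq_refl)). lra. Qed.

Lemma rsum_const {A} (f : A -> R) l c : (forall a, In a l -> f a = c) -> rsum f l = INR (length l) * c.
Proof. unfold rsum; induction l; simpl; intros H; [lra|].
  rewrite IHl by auto. rewrite (H a (or_introl eq_refl)). destruct (length l); simpl; lra. Qed.

Lemma rsum_lin {A} (f g : A -> R) l v : rsum (fun a => f a + g a * v) l = rsum f l + rsum g l * v.
Proof. unfold rsum; induction l; simpl; [lra|]. rewrite IHl; lra. Qed.

Lemma rsum_nonneg {A} (f : A -> R) l : (forall a, In a l -> 0 <= f a) -> 0 <= rsum f l.
Proof. intros H. pose proof (rsum_le (fun _ => 0) f l H). rewrite (rsum_const (fun _ : A => 0) l 0) in H0 by auto. lra. Qed.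

Lemma rsum_map {A B} (h : A -> B) f l : rsum f (map h l) = rsum (fun a => f (h a)) l.
Proof. unfold rsum; rewrite map_map; reflexivity. Qed.

Lemma seq_shift0 a n : seq a n = map (Nat.add a) (seq 0 n).
Proof. revert a; induction n; intros a; simpl; auto. f_equal; [lia|].
  rewrite IHn, (IHn 1%nat), map_map. apply map_ext. intros; lia. Qed.

Lemma avg_eq f xs : xs <> nil -> avg f xs = rsum f xs / INR (length xs).
Proof. destruct xs; [congruence|]. reflexivity. Qed.

Lemma avg_le f g xs : (forall a, In a xs -> f a <= g a) -> avg f xs <= avg g xs.
Proof. intros H. destruct xs as [|x xs]; [simpl; lra|].
  rewrite !avg_eq by congruence.
  apply Rmult_le_compat_r.
  - left; apply Rinv_0_lt_compat. apply lt_0_INR; simpl; lia.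
  - apply (rsum_le f g (x::xs) H). Qed.

Lemma avg_nonneg f xs : (forall a, In a xs -> 0 <= f a) -> 0 <= avg f xs.
Proof. intros H. destruct xs as [|x xs]; [simpl; lra|].
  rewrite !avg_eq by congruence.
  apply Rmult_le_pos.
  - apply (rsum_nonneg f (x::xs) H).
  - left; apply Rinv_0_lt_compat. apply lt_0_INR; simpl; lia. Qed.

Lemma avg_single f x : avg f [x] = f x.
Proof. simpl. lra. Qed.

Fixpoint itv (b : nat) (G : Z) (c : config) (goal : state -> bool)
    (n : nat) (v : R) (s : state) : R :=
  match s with
  | Done _ => if goal s then 1 else 0
  | Outer => v
  | _ => match n with O => 0 | S n' => avg (itv b G c goal n' v) (step b G c s) end
  end.

Lemma reach_nonneg b G c goal n s : 0 <= reach b G c goal n s.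
Proof. revert s; induction n; intros s; simpl; destruct (is_done s); try (destruct (goal s)); try lra;
  apply avg_nonneg; auto. Qed.

Lemma reach_mono b G c goal n s : reach b G c goal n s <= reach b G c goal (S n) s.
Proof. revert s; induction n; intros s.
  - simpl. destruct (is_done s); [lra|]. apply avg_nonneg; intros; destruct (is_done a); try destruct (goal a); lra.
  - change (reach b G c goal (S n) s) with (if is_done s then (if goal s then 1 else 0) else avg (reach b G c goal n) (step b G c s)).
    change (reach b G c goal (S (S n)) s) with (if is_done s then (if goal s then 1 else 0) else avg (reach b G c goal (S n)) (step b G c s)).
    destruct (is_done s); [lra|]. apply avg_le; auto. Qed.

Lemma reach_mono_le b G c goal n m s : (n <= m)%nat -> reach b G c goal n s <= reach b G c goal m s.
Proof. induction 1; [lra|]. pose proof (reach_mono b G c goal m s); lra. Qed.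

Lemma iter_lower b G c goal k n s :
  itv b G c goal k (reach b G c goal n Outer) s <= reach b G c goal (k + n) s.
Proof. revert s; induction k; intros s.
  - destruct s; simpl; try lra; try (apply reach_nonneg).
    destruct n; simpl; lra.
  - destruct s; simpl plus.
    + simpl itv. apply reach_mono_le; lia.
    + change (avg (itv b G c goal k (reach b G c goal n Outer)) (step b G c (Scan x l)) <= avg (reach b G c goal (k+n)) (step b G c (Scan x l))).
      apply avg_le; auto.
    + change (avg (itv b G c goal k (reach b G c goal n Outer)) (step b G c (Refine l m)) <= avg (reach b G c goal (k+n)) (step b G c (Refine l m))).
      apply avg_le; auto.
    + simpl; lra.
Qed.

Lemma iter_upper b G c goal n s Rb :
  (forall m, (m <= n)%nat -> reach b G c goal m Outer <= Rb) ->
  reach b G c goal n s <= itv b G c goal n Rb s.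
Proof. revert s; induction n; intros s H.
  - destruct s; simpl; try lra. apply (H 0%nat); lia.
  - destruct s.
    + apply H; lia.
    + change (avg (reach b G c goal n) (step b G c (Scan x l)) <= avg (itv b G c goal n Rb) (step b G c (Scan x l))).
      apply avg_le; intros; apply IHn; intros; apply H; lia.
    + change (avg (reach b G c goal n) (step b G c (Refine l m)) <= avg (itv b G c goal n Rb) (step b G c (Refine l m))).
      apply avg_le; intros; apply IHn; intros; apply H; lia.
    + simpl; lra.
Qed.

Lemma iter_nonneg b G c goal n v s : 0 <= v -> 0 <= itv b G c goal n v s.
Proof. revert s; induction n; intros s Hv; destruct s; simpl; try lra; try (destruct (goal _); lra);
  apply avg_nonneg; auto. Qed.

Lemma iter_fuel b G c goal n v s : 0 <= v -> itv b G c goal n v s <= itv b G c goal (S n) v s.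
Proof. revert s; induction n; intros s Hv.
  - destruct s; simpl; try lra; try (apply avg_nonneg; intros a _; destruct a; try destruct (goal _); lra).
  - destruct s.
    + simpl; lra.
    + change (avg (itv b G c goal n v) (step b G c (Scan x l)) <= avg (itv b G c goal (S n) v) (step b G c (Scan x l))).
      apply avg_le; auto.
    + change (avg (itv b G c goal n v) (step b G c (Refine l m)) <= avg (itv b G c goal (S n) v) (step b G c (Refine l m))).
      apply avg_le; auto.
    + simpl; lra.
Qed.

Lemma iter_fuel_le b G c goal n m v s : 0 <= v -> (n <= m)%nat -> itv b G c goal n v s <= itv b G c goal m v s.
Proof. intros Hv; induction 1; [lra|]. pose proof (iter_fuel b G c goal m v s Hv); lra. Qed.

Lemma limit_abs (r : nat -> R) (q f : R) (K : nat) :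
  0 <= q -> 0 <= f < 1 -> r 0%nat = 0 ->
  (forall n, r n <= r (S n)) ->
  (forall n Rb, (forall m, (m <= n)%nat -> r m <= Rb) -> r (S n) <= q + f * Rb) ->
  (forall n, q + f * r n <= r (S (K + n))) ->
  Un_cv r (q / (1 - f)).
Proof.
  intros Hq Hf H0 Hmono Hup Hlow.
  set (L := q / (1 - f)).
  assert (HL : q + f * L = L) by (unfold L; field; lra).
  assert (HL0 : 0 <= L) by (unfold L; apply Rmult_le_pos; [lra| left; apply Rinv_0_lt_compat; lra]).
  assert (Hub : forall n, forall m, (m <= n)%nat -> r m <= L).
  { induction n; intros m Hm.
    - replace m with 0%nat by lia. lra.
    - destruct (Nat.eq_dec m (S n)) as [->|].
      + pose proof (Hup n L IHn). pose proof (Rmult_le_compat_l f _ _ (proj1 Hf) (IHn n (le_n _))). lra.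
      + apply IHn; lia. }
  assert (Hmono_le : forall n m, (n <= m)%nat -> r n <= r m).
  { intros n m; induction 1; [lra|]. pose proof (Hmono m); lra. }
  assert (Hj : forall j, L - r (j * S K)%nat <= f ^ j * L).
  { induction j.
    - simpl. rewrite H0. lra.
    - replace (S j * S K)%nat with (S (K + j * S K))%nat by lia.
      pose proof (Hlow (j * S K)%nat). simpl pow.
      assert (L - r (S (K + j * S K)) <= f * (L - r (j * S K)%nat)) by nra.
      pose proof (Rmult_le_compat_l f _ _ (proj1 Hf) IHj). lra. }
  intros eps Heps.
  assert (Habs : Rabs f < 1) by (rewrite Rabs_right; lra).
  destruct (pow_lt_1_zero f Habs (eps / (L + 1))) as [N HN].
  { apply Rdiv_lt_0_compat; lra. }
  exists (N * S K)%nat. intros n Hn.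
  unfold Rdist. rewrite Rabs_left1 by (pose proof (Hub n n (le_n _)); lra).
  pose proof (HN N (le_n _)). rewrite Rabs_right in H by (apply Rle_ge, pow_le; lra).
  pose proof (Hj N). pose proof (Hmono_le _ _ Hn).
  assert (f ^ N * L <= eps / (L + 1) * L) by (apply Rmult_le_compat_r; lra).
  assert (eps / (L + 1) * L < eps).
  { unfold Rdiv. rewrite Rmult_assoc. rewrite <- (Rmult_1_r eps) at 2. apply Rmult_lt_compat_l; [lra|].
    apply (Rmult_lt_reg_l (L+1)); [lra|]. field_simplify; lra. }
  lra.
Qed.

Definition gval (goal : state -> bool) (l : Z) : R := if goal (Done l) then 1 else 0.
Definition fr (s e : Z) : R := IZR s * powerRZ 2 e - IZR (floor_pow2 s e).

Lemma pRZ_IZR e : (0 <= e)%Z -> powerRZ 2 e = IZR (2 ^ e).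
Proof. intros He. rewrite <- (Z2Nat.id e He). rewrite <- pow_powerRZ, pow_IZR. reflexivity. Qed.

Lemma fp_div s e bz : (0 <= bz)%Z -> (floor_pow2 s (e + bz) / 2 ^ bz)%Z = floor_pow2 s e.
Proof. intros Hb. unfold floor_pow2.
  destruct (Z.leb_spec 0 e); destruct (Z.leb_spec 0 (e + bz)); try lia.
  - rewrite Z.pow_add_r by lia. rewrite Z.mul_assoc, Z.div_mul; auto.
    apply Z.pow_nonzero; lia.
  - replace (2 ^ bz)%Z with (2 ^ (e + bz) * 2 ^ (- e))%Z by (rewrite <- Z.pow_add_r by lia; f_equal; lia).
    rewrite Z.mul_comm. apply Z.div_mul_cancel_l; apply Z.pow_nonzero; lia.
  - rewrite Z.div_div by (try apply Z.pow_nonzero; try apply Z.pow_pos_nonneg; lia).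
    rewrite <- Z.pow_add_r by lia. f_equal. f_equal. lia.
Qed.

Lemma fr_rec s e bz : (0 <= bz)%Z ->
  fr s e = (IZR ((floor_pow2 s (e + bz)) mod 2 ^ bz) + fr s (e + bz)) / IZR (2 ^ bz).
Proof. intros Hb. unfold fr.
  assert (HB : (0 < 2 ^ bz)%Z) by (apply Z.pow_pos_nonneg; lia).
  pose proof (Z.div_mod (floor_pow2 s (e + bz)) (2 ^ bz) ltac:(lia)) as Hdm.
  rewrite fp_div in Hdm by lia.
  set (t := ((floor_pow2 s (e + bz)) mod 2 ^ bz)%Z) in *.
  rewrite Hdm. rewrite plus_IZR, mult_IZR.
  rewrite powerRZ_add by lra. rewrite (pRZ_IZR bz) by lia.
  assert (0 < IZR (2 ^ bz)) by (apply IZR_lt; lia).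
  field. lra.
Qed.

Lemma fr_zero s e : (0 <= e)%Z -> fr s e = 0.
Proof. intros He. unfold fr, floor_pow2. destruct (Z.leb_spec 0 e); try lia.
  rewrite mult_IZR, pRZ_IZR by lia. lra. Qed.

Lemma rsum_three (F : nat -> R) n t g X v : (t < n)%nat ->
  (forall k, (k < t)%nat -> F k = g) -> F t = X -> (forall k, (t < k < n)%nat -> F k = v) ->
  rsum F (seq 0 n) = INR t * g + X + INR (n - 1 - t) * v.
Proof. intros Htn H1 H2 H3.
  replace n with (t + S (n - 1 - t))%nat at 1 by lia.
  rewrite seq_app. rewrite rsum_app. simpl (seq (0 + t) _).
  unfold rsum at 2. simpl map. simpl fold_right. fold (rsum F (seq (S t) (n - 1 - t))).
  rewrite (rsum_const F (seq 0 t) g), (rsum_const F (seq (S t) (n-1-t)) v), !length_seq.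
  - rewrite H2. lra.
  - intros k Hk. apply in_seq in Hk. apply H3; lia.
  - intros k Hk. apply in_seq in Hk. apply H1; lia.
Qed.

Lemma refine_val (b : nat) (G : Z) (c : config) (goal : state -> bool) (v : R) (l : Z) : (2 <= b)%nat ->
  forall (d : nat) (m : Z), (- (l + G + m * Z.of_nat b) <= Z.of_nat d * Z.of_nat b)%Z ->
  forall n, (S d <= n)%nat ->
  itv b G c goal n v (Refine l m) =
    fr (SS c l) (l + G + (m - 1) * Z.of_nat b)%Z * gval goal l
    + (1 - fr (SS c l) (l + G + (m - 1) * Z.of_nat b)%Z) * v.
Proof.
  intros Hb d. induction d as [|d IH]; intros m Hm n Hn;
  (destruct n as [|n]; [lia|]);
  set (bz := Z.of_nat b) in *; set (s := SS c l);
  set (e := (l + G + m * bz)%Z);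
  assert (HB : (0 < 2 ^ bz)%Z) by (apply Z.pow_pos_nonneg; lia);
  set (t := (floor_pow2 s e mod 2 ^ bz)%Z);
  assert (Ht : (0 <= t < 2 ^ bz)%Z) by (apply Z.mod_pos_bound; lia);
  assert (Hrec : fr s (l + G + (m - 1) * bz) = (IZR t + fr s e) / IZR (2 ^ bz))
    by (unfold t, e; replace (l + G + m * bz)%Z with ((l + G + (m - 1) * bz) + bz)%Z by lia;
        apply fr_rec; lia);
  change (itv b G c goal (S n) v (Refine l m)) with (avg (itv b G c goal n v) (step b G c (Refine l m)));
  unfold step; fold bz; fold s; fold e; fold t;
  (rewrite avg_eq; [|destruct (Z.to_nat (2 ^ bz)) eqn:E; [lia|discriminate]]);
  rewrite rsum_map, length_map, length_seq;
  (erewrite (rsum_three _ (Z.to_nat (2 ^ bz)) (Z.to_nat t) (gval goal l)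
     (if (0 <=? e)%Z then v else itv b G c goal n v (Refine l (m + 1))) v);
   [ | lia
     | intros k Hk; assert (Z.of_nat k < t)%Z by lia; destruct (Z.ltb_spec (Z.of_nat k) t); [|lia];
       destruct n; reflexivity
     | rewrite Z2Nat.id by lia; destruct (Z.ltb_spec t t); [lia|]; simpl;
       destruct (Z.leb 0 e); [destruct n; reflexivity| reflexivity]
     | intros k Hk; destruct (Z.ltb_spec (Z.of_nat k) t); [lia|];
       destruct (Z.ltb_spec t (Z.of_nat k)); [|lia]; destruct n; reflexivity ]);
  assert (HBr : 0 < IZR (2 ^ bz)) by (apply IZR_lt; lia);
  rewrite !INR_IZR_INZ, !Z2Nat.id by lia;
  replace (Z.of_nat (Z.to_nat (2 ^ bz) - 1 - Z.to_nat t)) with (2 ^ bz - 1 - t)%Z by lia;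
  rewrite Hrec.
  -
    assert (He : (0 <= e)%Z) by (unfold e; lia).
    destruct (Z.leb_spec 0 e); [|lia].
    rewrite (fr_zero s e He). rewrite !minus_IZR. field. lra.
  - destruct (Z.leb_spec 0 e).
    + rewrite (fr_zero s e) by lia. rewrite !minus_IZR. field. lra.
    + rewrite (IH (m + 1)%Z) by (unfold bz in *; lia).
      replace (l + G + (m + 1 - 1) * bz)%Z with e by (unfold e; lia).
      fold s. rewrite !minus_IZR. field. lra.
Qed.

Definition zsum {A} (f : A -> Z) (l : list A) : Z := fold_right Z.add 0%Z (map f l).

Lemma zsum_app {A} (f : A -> Z) l1 l2 : zsum f (l1 ++ l2) = (zsum f l1 + zsum f l2)%Z.
Proof. unfold zsum; induction l1; simpl; [lia| rewrite IHl1; lia]. Qed.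

Lemma zsum_nonneg {A} (f : A -> Z) l : (forall a, In a l -> 0 <= f a)%Z -> (0 <= zsum f l)%Z.
Proof. unfold zsum; induction l; simpl; intros H; [lia|].
  specialize (IHl (fun a0 h => H a0 (or_intror h))). specialize (H a (or_introl eq_refl)). lia. Qed.

Lemma zsum_IZR {A} (f : A -> Z) l : IZR (zsum f l) = rsum (fun a => IZR (f a)) l.
Proof. unfold zsum, rsum; induction l; simpl; auto. rewrite plus_IZR, IHl; reflexivity. Qed.

Lemma sum_pos_list (L : list Z) : Forall (fun s => 0 <= s)%Z L -> (0 <= fold_right Z.add 0 L)%Z.
Proof. induction 1; simpl; lia. Qed.

Lemma SS_nonneg b c l : normalized b c -> (0 <= SS c l)%Z.
Proof. intros Hn. unfold SS. destruct (in_levels c l); [|lia].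
  set (i := Z.to_nat (l - lo c)).
  destruct (Nat.lt_ge_cases i (length (lv c))).
  - apply sum_pos_list. unfold normalized in Hn. rewrite Forall_forall in Hn.
    specialize (Hn _ (nth_In _ nil H)). rewrite Forall_forall in *. intros x Hx.
    specialize (Hn x Hx). pose proof (Z.pow_nonneg 2 (Z.of_nat b - 1)). lia.
  - rewrite nth_overflow by lia. simpl; lia.
Qed.

Lemma fp_nonneg s e : (0 <= s)%Z -> (0 <= floor_pow2 s e)%Z.
Proof. intros Hs. unfold floor_pow2. destruct (Z.leb_spec 0 e).
  - apply Z.mul_nonneg_nonneg; [lia| apply Z.pow_nonneg; lia].
  - apply Z.div_pos; [lia| apply Z.pow_pos_nonneg; lia]. Qed.

Lemma Al_nonneg b G c l : normalized b c -> (0 <= Al G c l)%Z.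
Proof. intros Hn. unfold Al. destruct (Z.ltb_spec 0 (SS c l)); [|lia].
  pose proof (fp_nonneg (SS c l) (l + G) ltac:(lia)). lia. Qed.

Definition Sp (G : Z) (c : config) (k : nat) : Z := zsum (fun i => Al G c (lo c + Z.of_nat i)) (seq 0 k).

Definition Cl (G : Z) (c : config) (goal : state -> bool) (v : R) (l : Z) : R :=
  W c l * powerRZ 2 G * gval goal l + (IZR (Al G c l) - W c l * powerRZ 2 G) * v.

Definition Dd (G : Z) (c : config) : nat := Z.to_nat (Z.abs (lo c + G)).

Lemma scan_step b G c goal n v x l : (lo c <= l)%Z ->
  itv b G c goal (S n) v (Scan x l) =
  if (x <? Al G c l)%Z then gval goal l
  else if (x =? Al G c l)%Z then itv b G c goal n v (Refine l 1)
  else itv b G c goal n v (Scan (x - Al G c l) (l - 1)).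
Proof. intros Hl.
  change (itv b G c goal (S n) v (Scan x l)) with (avg (itv b G c goal n v) (step b G c (Scan x l))).
  unfold step. destruct (Z.ltb_spec l (lo c)); [lia|].
  destruct (x <? Al G c l)%Z; [rewrite avg_single; destruct n; reflexivity|].
  destruct (x =? Al G c l)%Z; rewrite avg_single; reflexivity.
Qed.

Lemma level_val b G c goal v l n : (2 <= b)%nat -> normalized b c -> (lo c <= l)%Z ->
  (S (Dd G c) <= n)%nat ->
  rsum (fun j => itv b G c goal (S n) v (Scan (Z.of_nat j + 1) l)) (seq 0 (Z.to_nat (Al G c l)))
  = Cl G c goal v l.
Proof. intros Hb Hn Hl Hnd.
  pose proof (SS_nonneg b c l Hn).
  unfold Cl, W. unfold Al at 1 2.
  destruct (Z.ltb_spec 0 (SS c l)).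
  2:{ replace (SS c l) with 0%Z by lia. simpl. unfold rsum; simpl. lra. }
  set (P := floor_pow2 (SS c l) (l + G)).
  assert (HP : (0 <= P)%Z) by (apply fp_nonneg; lia).
  erewrite (rsum_three _ (Z.to_nat (P + 1)) (Z.to_nat P) (gval goal l)
     (itv b G c goal n v (Refine l 1)) v).
  - assert (HD : Z.of_nat (Dd G c) = Z.abs (lo c + G)) by (unfold Dd; rewrite Z2Nat.id; lia).
    assert (HD2 : (Z.of_nat (Dd G c) <= Z.of_nat (Dd G c) * Z.of_nat b)%Z) by nia.
    rewrite (refine_val b G c goal v l Hb (Dd G c) 1%Z) by lia.
    replace (l + G + (1 - 1) * Z.of_nat b)%Z with (l + G)%Z by lia.
    replace (Z.to_nat (P + 1) - 1 - Z.to_nat P)%nat with 0%nat by lia.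
    rewrite INR_IZR_INZ, Z2Nat.id by lia.
    unfold fr. fold P. rewrite plus_IZR.
    rewrite powerRZ_add by lra. simpl INR. ring.
  - lia.
  - intros k Hk. rewrite scan_step by lia. unfold Al; fold P.
    destruct (Z.ltb_spec 0 (SS c l)); [|lia].
    destruct (Z.ltb_spec (Z.of_nat k + 1) (P + 1)); [reflexivity|lia].
  - rewrite scan_step by lia. unfold Al; fold P.
    destruct (Z.ltb_spec 0 (SS c l)); [|lia].
    destruct (Z.ltb_spec (Z.of_nat (Z.to_nat P) + 1) (P + 1)); [lia|].
    destruct (Z.eqb_spec (Z.of_nat (Z.to_nat P) + 1) (P + 1)); [reflexivity|lia].
  - intros k Hk. lia.
Qed.

Lemma Sp_nonneg b G c k : normalized b c -> (0 <= Sp G c k)%Z.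
Proof. intros Hn. apply zsum_nonneg. intros; apply (Al_nonneg b); auto. Qed.

Lemma scan_sum b G c goal v : (2 <= b)%nat -> normalized b c -> forall k n, (k + S (Dd G c) <= n)%nat ->
  rsum (fun j => itv b G c goal n v (Scan (Z.of_nat j + 1) (lo c + Z.of_nat k - 1)))
       (seq 0 (Z.to_nat (Sp G c k)))
  = rsum (fun i => Cl G c goal v (lo c + Z.of_nat i)) (seq 0 k).
Proof. intros Hb Hn k. induction k as [|k IH]; intros n Hkn.
  - unfold Sp, zsum; simpl. reflexivity.
  - destruct n as [|n]; [lia|].
    pose proof (Sp_nonneg b G c k Hn) as HS. pose proof (Al_nonneg b G c (lo c + Z.of_nat k) Hn) as HA.
    unfold Sp. rewrite seq_S, zsum_app. fold (Sp G c k). unfold zsum at 1. simpl map. simpl fold_right.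
    rewrite Z.add_0_r. rewrite Z2Nat.inj_add by lia.
    rewrite rsum_app. unfold rsum at 3. simpl map. simpl fold_right. rewrite Rplus_0_r.
    replace (lo c + Z.of_nat (S k) - 1)%Z with (lo c + Z.of_nat k)%Z by lia.
    rewrite (Nat.add_comm (Z.to_nat (Sp G c k))), seq_app, rsum_app.
    rewrite (level_val b G c goal v (lo c + Z.of_nat k) n Hb Hn) by lia.
    rewrite seq_shift0, rsum_map. simpl (0 + _)%nat.
    rewrite <- (IH n) by lia.
    rewrite Rplus_comm. f_equal.
    apply rsum_ext. intros j _.
    rewrite scan_step by lia.
    rewrite Nat2Z.inj_add, Z2Nat.id by lia.
    destruct (Z.ltb_spec (Al G c (lo c + Z.of_nat k) + Z.of_nat j + 1) (Al G c (lo c + Z.of_nat k))); [lia|].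
    destruct (Z.eqb_spec (Al G c (lo c + Z.of_nat k) + Z.of_nat j + 1) (Al G c (lo c + Z.of_nat k))); [lia|].
    f_equal. f_equal; lia.
Qed.

Lemma last_irrel (l : list nat) x d d' : last (x :: l) d = last (x :: l) d'.
Proof. revert x; induction l as [|y l IH]; intros x; [reflexivity|].
  change (last (y :: l) d = last (y :: l) d'). apply IH. Qed.

Lemma last_filter (p : nat -> bool) : forall n a d, (d <= a)%nat ->
  (forall i, (a <= i < a + n)%nat -> p i = true -> (i <= last (filter p (seq a n)) d)%nat) /\
  (d <= last (filter p (seq a n)) d)%nat.
Proof. induction n; intros a d Hda; simpl.
  - split; [intros; lia| lia].
  - destruct (p a) eqn:Hp.
    + destruct (IHn (S a) a ltac:(lia)) as [H1 H2].
      assert (Hl : last (a :: filter p (seq (S a) n)) d = last (filter p (seq (S a) n)) a).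
      { destruct (filter p (seq (S a) n)); [reflexivity|]. apply (last_irrel l n0 d a). }
      rewrite Hl. split; [|lia].
      intros i Hi Hpi. destruct (Nat.eq_dec i a); [lia|]. apply H1; auto; lia.
    + destruct (IHn (S a) d ltac:(lia)) as [H1 H2]. split; auto.
      intros i Hi Hpi. destruct (Nat.eq_dec i a); [subst; congruence|]. apply H1; auto; lia.
Qed.

Definition tidx (c : config) : nat :=
  last (filter (fun i => 0 <? SS c (lo c + Z.of_nat i))%Z (seq 0 (Nlev c))) 0%nat.

Lemma top_eq c : top c = (lo c + Z.of_nat (tidx c))%Z.
Proof. reflexivity. Qed.

Lemma SS_out c l : in_levels c l = false -> SS c l = 0%Z.
Proof. intros H; unfold SS; rewrite H; reflexivity. Qed.

Lemma Al_tail G c i : (tidx c < i)%nat -> Al G c (lo c + Z.of_nat i) = 0%Z.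
Proof. intros Hi. unfold Al.
  destruct (Z.ltb_spec 0 (SS c (lo c + Z.of_nat i))); [|reflexivity].
  exfalso. destruct (Nat.lt_ge_cases i (Nlev c)).
  - destruct (last_filter (fun i => 0 <? SS c (lo c + Z.of_nat i))%Z (Nlev c) 0 0 (le_n _)) as [H1 _].
    specialize (H1 i ltac:(lia)). simpl in H1. rewrite (proj2 (Z.ltb_lt _ _) H) in H1.
    specialize (H1 eq_refl). unfold tidx in Hi. lia.
  - rewrite SS_out in H; [lia|]. unfold in_levels.
    destruct (Z.leb_spec (lo c) (lo c + Z.of_nat i)); destruct (Z.ltb_spec (lo c + Z.of_nat i) (lo c + Z.of_nat (Nlev c))); simpl; auto; lia.
Qed.

Lemma Al_out G c i : (Nlev c <= i)%nat -> Al G c (lo c + Z.of_nat i) = 0%Z.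
Proof. intros Hi. unfold Al. rewrite SS_out; [reflexivity|]. unfold in_levels.
  destruct (Z.leb_spec (lo c) (lo c + Z.of_nat i)); destruct (Z.ltb_spec (lo c + Z.of_nat i) (lo c + Z.of_nat (Nlev c))); simpl; auto; lia.
Qed.

Lemma zsum_zero {A} (f : A -> Z) l : (forall a, In a l -> f a = 0%Z) -> zsum f l = 0%Z.
Proof. unfold zsum; induction l; simpl; intros H; auto. rewrite H by auto. rewrite IHl; auto. Qed.

Lemma zsum_tail (f : nat -> Z) k m : (forall i, (k <= i)%nat -> f i = 0%Z) ->
  zsum f (seq 0 (k + m)) = zsum f (seq 0 k).
Proof. intros H. rewrite seq_app, zsum_app, (zsum_zero f (seq (0 + k) m)); [lia|].
  intros a Ha; apply in_seq in Ha; apply H; lia. Qed.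

Lemma rsum_tail (f : nat -> R) k m : (forall i, (k <= i)%nat -> f i = 0) ->
  rsum f (seq 0 (k + m)) = rsum f (seq 0 k).
Proof. intros H. rewrite seq_app, rsum_app, (rsum_const f (seq (0 + k) m) 0); [lra|].
  intros a Ha; apply in_seq in Ha; apply H; lia. Qed.

Lemma zsum_tail2 (f : nat -> Z) k1 k2 : (forall i, (Nat.min k1 k2 <= i)%nat -> f i = 0%Z) ->
  zsum f (seq 0 k1) = zsum f (seq 0 k2).
Proof. intros H. assert (Hm1 : (Nat.min k1 k2 <= k1)%nat) by lia. assert (Hm2 : (Nat.min k1 k2 <= k2)%nat) by lia.
  set (m := Nat.min k1 k2) in *.
  replace k1 with (m + (k1 - m))%nat by lia. replace k2 with (m + (k2 - m))%nat by lia.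
  rewrite !zsum_tail by exact H. reflexivity. Qed.

Lemma rsum_tail2 (f : nat -> R) k1 k2 : (forall i, (Nat.min k1 k2 <= i)%nat -> f i = 0) ->
  rsum f (seq 0 k1) = rsum f (seq 0 k2).
Proof. intros H. assert (Hm1 : (Nat.min k1 k2 <= k1)%nat) by lia. assert (Hm2 : (Nat.min k1 k2 <= k2)%nat) by lia.
  set (m := Nat.min k1 k2) in *.
  replace k1 with (m + (k1 - m))%nat by lia. replace k2 with (m + (k2 - m))%nat by lia.
  rewrite !rsum_tail by exact H. reflexivity. Qed.

Lemma Al_zero_tail G c i : (Nat.min (S (tidx c)) (Nlev c) <= i)%nat -> Al G c (lo c + Z.of_nat i) = 0%Z.
Proof. intros H. destruct (Nat.le_gt_cases (Nlev c) i).
  - apply Al_out; auto.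
  - apply Al_tail; lia. Qed.

Lemma W_zero c l : SS c l = 0%Z -> W c l = 0.
Proof. intros H; unfold W; rewrite H; simpl; lra. Qed.

Lemma SS_zero_of_Al b G c l : normalized b c -> Al G c l = 0%Z -> SS c l = 0%Z.
Proof. intros Hn H. pose proof (SS_nonneg b c l Hn). unfold Al in H.
  destruct (Z.ltb_spec 0 (SS c l)); [|lia].
  pose proof (fp_nonneg (SS c l) (l + G) ltac:(lia)). lia. Qed.

Lemma Cl_zero b G c goal v l : normalized b c -> Al G c l = 0%Z -> Cl G c goal v l = 0.
Proof. intros Hn H. unfold Cl. rewrite H, (W_zero c l (SS_zero_of_Al b G c l Hn H)). simpl; lra. Qed.

Lemma outer_val b G c goal v n : (2 <= b)%nat -> normalized b c -> (1 <= Atot G c)%Z ->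
  (S (tidx c) + S (Dd G c) <= n)%nat ->
  avg (itv b G c goal n v) (step b G c Outer) =
  rsum (fun i => Cl G c goal v (lo c + Z.of_nat i)) (seq 0 (Nlev c)) / IZR (Atot G c).
Proof. intros Hb Hn HA Hn'.
  unfold step. rewrite avg_eq by (destruct (Z.to_nat (Atot G c)) eqn:E; [lia|discriminate]).
  rewrite rsum_map, length_map, length_seq, INR_IZR_INZ, Z2Nat.id by lia.
  assert (HAt : Atot G c = Sp G c (S (tidx c))).
  { unfold Atot, Sp. symmetry. apply zsum_tail2. intros i Hi. apply Al_zero_tail. lia. }
  rewrite HAt at 1.
  replace (top c) with (lo c + Z.of_nat (S (tidx c)) - 1)%Z by (rewrite top_eq; lia).
  rewrite (scan_sum b G c goal v Hb Hn (S (tidx c)) n) by lia.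
  f_equal. apply rsum_tail2. intros i Hi. apply (Cl_zero b); auto. apply Al_zero_tail. lia.
Qed.

Lemma exists_pos (L : list (list Z)) : Forall (Forall (fun s => 0 < s)%Z) L ->
  (1 <= fold_right plus 0 (map (@length Z) L))%nat ->
  exists i, (i < length L)%nat /\ (0 < fold_right Z.add 0 (nth i L nil))%Z.
Proof. induction L as [|a L IH]; intros HF Hl; simpl in *; [lia|].
  inversion HF; subst.
  destruct a as [|x a].
  - simpl in Hl. destruct (IH H2 Hl) as [i [Hi Hs]]. exists (S i). split; [lia| exact Hs].
  - exists 0%nat. split; [lia|]. simpl. inversion H1; subst.
    assert (Forall (fun s => 0 <= s)%Z a) by (eapply Forall_impl; [|exact H4]; intros; simpl in *; lia).
    pose proof (sum_pos_list a H). lia.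
Qed.

Lemma exists_level b c : (2 <= b)%nat -> normalized b c -> (1 <= zcount c)%nat ->
  exists i, (i < Nlev c)%nat /\ (0 < SS c (lo c + Z.of_nat i))%Z.
Proof. intros Hb Hn Hz.
  assert (HF : Forall (Forall (fun s => 0 < s)%Z) (lv c)).
  { eapply Forall_impl; [|exact Hn]. intros a Ha. eapply Forall_impl; [|exact Ha].
    intros s Hs. cbv beta in *. pose proof (Z.pow_pos_nonneg 2 (Z.of_nat b - 1) ltac:(lia) ltac:(lia)). lia. }
  destruct (exists_pos (lv c) HF Hz) as [i [Hi Hs]]. exists i. split; [exact Hi|].
  unfold SS, in_levels, Nlev in *.
  destruct (Z.leb_spec (lo c) (lo c + Z.of_nat i)); [|lia].
  destruct (Z.ltb_spec (lo c + Z.of_nat i) (lo c + Z.of_nat (length (lv c)))); [|lia].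
  simpl. replace (Z.to_nat (lo c + Z.of_nat i - lo c)) with i by lia. exact Hs.
Qed.

Lemma fr_lt1 s e : (0 <= s)%Z -> fr s e < 1.
Proof. intros Hs. destruct (Z.leb_spec 0 e).
  - rewrite fr_zero by lia. lra.
  - unfold fr, floor_pow2. destruct (Z.leb_spec 0 e); [lia|].
    set (p := (2 ^ (- e))%Z).
    assert (Hp : (0 < p)%Z) by (apply Z.pow_pos_nonneg; lia).
    assert (HpR : 0 < IZR p) by (apply IZR_lt; lia).
    replace (powerRZ 2 e) with (/ IZR p).
    2:{ unfold p. rewrite <- pRZ_IZR by lia. rewrite powerRZ_neg', Rinv_inv. reflexivity.
 }
    pose proof (Z.div_mod s p ltac:(lia)) as Hdm. pose proof (Z.mod_pos_bound s p Hp) as Hr.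
    set (q := (s / p)%Z) in *. set (r := (s mod p)%Z) in *.
    rewrite Hdm at 1. rewrite plus_IZR, mult_IZR.
    assert (IZR r < IZR p) by (apply IZR_lt; lia).
    apply (Rmult_lt_reg_r (IZR p)); auto. field_simplify; lra.
Qed.

Lemma rsum_sub {A} (f g : A -> R) l : rsum (fun a => f a - g a) l = rsum f l - rsum g l.
Proof. unfold rsum; induction l; simpl; [lra|]. rewrite IHl; lra. Qed.

Lemma rsum_scal {A} (f : A -> R) l k : rsum (fun a => f a * k) l = rsum f l * k.
Proof. unfold rsum; induction l; simpl; [lra|]. rewrite IHl; lra. Qed.

Lemma rsum_ge_elem {A} (f : A -> R) l a : In a l -> (forall x, In x l -> 0 <= f x) -> f a <= rsum f l.
Proof. unfold rsum; induction l as [|y l IH]; simpl; intros Hin H; [contradiction|].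
  destruct Hin as [->|Hin].
  - assert (0 <= fold_right Rplus 0 (map f l)) by (apply (rsum_nonneg f l); auto). lra.
  - specialize (IH Hin (fun x h => H x (or_intror h))). specialize (H y (or_introl eq_refl)). lra.
Qed.

Lemma W_nonneg b c l : normalized b c -> 0 <= W c l.
Proof. intros Hn. unfold W. apply Rmult_le_pos.
  - apply IZR_le. apply (SS_nonneg b); auto.
  - left. apply powerRZ_lt. lra. Qed.

Lemma beta_nonneg b G c l : normalized b c -> 0 <= IZR (Al G c l) - W c l * powerRZ 2 G.
Proof. intros Hn. pose proof (SS_nonneg b c l Hn). unfold Al, W.
  destruct (Z.ltb_spec 0 (SS c l)).
  - pose proof (fr_lt1 (SS c l) (l + G) H). unfold fr in H1.
    rewrite powerRZ_add in H1 by lra. rewrite plus_IZR. simpl. lra.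
  - replace (SS c l) with 0%Z by lia. simpl. lra.
Qed.

Lemma main_gen b G c goal : (2 <= b)%nat -> normalized b c -> (1 <= zcount c)%nat ->
  Un_cv (fun n => reach b G c goal n Outer)
    (rsum (fun i => W c (lo c + Z.of_nat i) * powerRZ 2 G * gval goal (lo c + Z.of_nat i)) (seq 0 (Nlev c))
     / rsum (fun i => W c (lo c + Z.of_nat i) * powerRZ 2 G) (seq 0 (Nlev c))).
Proof. intros Hb Hn Hz.
  set (N := Nlev c).
  set (Q := rsum (fun i => W c (lo c + Z.of_nat i) * powerRZ 2 G * gval goal (lo c + Z.of_nat i)) (seq 0 N)).
  set (M := rsum (fun i => W c (lo c + Z.of_nat i) * powerRZ 2 G) (seq 0 N)).
  destruct (exists_level b c Hb Hn Hz) as [i0 [Hi0 Hs0]].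
  assert (HP : 0 < powerRZ 2 G) by (apply powerRZ_lt; lra).
  assert (HM : 0 < M).
  { apply Rlt_le_trans with (W c (lo c + Z.of_nat i0) * powerRZ 2 G).
    - apply Rmult_lt_0_compat; auto. unfold W. apply Rmult_lt_0_compat; [apply IZR_lt; lia| apply powerRZ_lt; lra].
    - apply (rsum_ge_elem (fun i => W c (lo c + Z.of_nat i) * powerRZ 2 G)).
      + apply in_seq; lia.
      + intros; apply Rmult_le_pos; [apply (W_nonneg b); auto| lra]. }
  assert (HQ : 0 <= Q).
  { apply rsum_nonneg. intros; apply Rmult_le_pos; [apply Rmult_le_pos; [apply (W_nonneg b); auto| lra]|].
    unfold gval; destruct (goal _); lra. }
  assert (HAt : (1 <= Atot G c)%Z).
  { assert (Ale : (Al G c (lo c + Z.of_nat i0) <= Atot G c)%Z).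
    { unfold Atot. fold N. clear -Hn Hi0.
      assert (In i0 (seq 0 N)) by (apply in_seq; lia). revert H. generalize (seq 0 N).
      induction l as [|y l IH]; simpl; intros Hin; [contradiction|].
      pose proof (Al_nonneg b G c (lo c + Z.of_nat y) Hn).
      assert (0 <= fold_right Z.add 0 (map (fun i => Al G c (lo c + Z.of_nat i)) l))%Z
        by (apply (zsum_nonneg (fun i => Al G c (lo c + Z.of_nat i))); intros; apply (Al_nonneg b); auto).
      destruct Hin as [->|Hin]; [lia|]. specialize (IH Hin). lia. }
    unfold Al at 1 in Ale. destruct (Z.ltb_spec 0 (SS c (lo c + Z.of_nat i0))); [|lia].
    pose proof (fp_nonneg (SS c (lo c + Z.of_nat i0)) (lo c + Z.of_nat i0 + G) ltac:(lia)). lia. }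
  set (A := IZR (Atot G c)).
  assert (HA : 1 <= A) by (apply IZR_le; lia).
  assert (Hbeta : rsum (fun i => IZR (Al G c (lo c + Z.of_nat i)) - W c (lo c + Z.of_nat i) * powerRZ 2 G) (seq 0 N) = A - M).
  { rewrite rsum_sub. fold M. f_equal. unfold A. rewrite <- zsum_IZR. reflexivity. }
  assert (HAM : 0 <= A - M).
  { rewrite <- Hbeta. apply rsum_nonneg. intros; apply (beta_nonneg b); auto. }
  set (T := (S (tidx c) + S (Dd G c))%nat).
  assert (Hkey : forall v n, (T <= n)%nat ->
            avg (itv b G c goal n v) (step b G c Outer) = Q / A + (A - M) / A * v).
  { intros v n Hn'. rewrite (outer_val b G c goal v n Hb Hn HAt Hn'). fold A. fold N.
    unfold Cl. rewrite (rsum_lin (fun i => W c (lo c + Z.of_nat i) * powerRZ 2 G * gval goal (lo c + Z.of_nat i))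
                          (fun i => IZR (Al G c (lo c + Z.of_nat i)) - W c (lo c + Z.of_nat i) * powerRZ 2 G)).
    fold Q. rewrite Hbeta. field. lra. }
  replace (Q / M) with ((Q / A) / (1 - (A - M) / A)) by (field; split; lra).
  apply (limit_abs _ (Q / A) ((A - M) / A) T).
  - apply Rmult_le_pos; [lra| left; apply Rinv_0_lt_compat; lra].
  - split; [apply Rmult_le_pos; [lra| left; apply Rinv_0_lt_compat; lra]|].
    apply (Rmult_lt_reg_r A); [lra|]. field_simplify; lra.
  - reflexivity.
  - intros n. apply reach_mono.
  - intros n Rb HR.
    assert (HR0 : 0 <= Rb) by (pose proof (HR 0%nat ltac:(lia)); simpl in H; lra).
    change (reach b G c goal (S n) Outer) with (avg (reach b G c goal n) (step b G c Outer)).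
    apply Rle_trans with (avg (itv b G c goal n Rb) (step b G c Outer)).
    { apply avg_le. intros; apply iter_upper; auto. }
    apply Rle_trans with (avg (itv b G c goal (n + T) Rb) (step b G c Outer)).
    { apply avg_le. intros; apply iter_fuel_le; auto; lia. }
    rewrite Hkey by lia. lra.
  - intros n.
    change (reach b G c goal (S (T + n)) Outer) with (avg (reach b G c goal (T + n)) (step b G c Outer)).
    rewrite <- (Hkey (reach b G c goal n Outer) T) by lia.
    apply avg_le. intros; apply iter_lower.
Qed.

Lemma rsum_ind_sum (h : Z -> R) l0 (lo0 : Z) : forall n a,
  rsum (fun i => h (lo0 + Z.of_nat i)%Z * (if (lo0 + Z.of_nat i =? l0)%Z then 1 else 0)) (seq a n)
  = if ((lo0 + Z.of_nat a <=? l0) && (l0 <? lo0 + Z.of_nat a + Z.of_nat n))%Z%bool then h l0 else 0.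
Proof. induction n; intros a.
  - unfold rsum; simpl. destruct (Z.leb_spec (lo0 + Z.of_nat a) l0); destruct (Z.ltb_spec l0 (lo0 + Z.of_nat a + 0)); simpl; lra || lia.
  - change (seq a (S n)) with (a :: seq (S a) n). unfold rsum; simpl map; simpl fold_right. fold (rsum (fun i => h (lo0 + Z.of_nat i)%Z * (if (lo0 + Z.of_nat i =? l0)%Z then 1 else 0)) (seq (S a) n)).
    rewrite IHn.
    destruct (Z.eqb_spec (lo0 + Z.of_nat a) l0).
    + subst. destruct (Z.leb_spec (lo0 + Z.of_nat a) (lo0 + Z.of_nat a)); [|lia].
      destruct (Z.ltb_spec (lo0 + Z.of_nat a) (lo0 + Z.of_nat a + Z.of_nat (S n))); [|lia].
      destruct (Z.leb_spec (lo0 + Z.of_nat (S a)) (lo0 + Z.of_nat a)); [lia|]. simpl. lra.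
    + destruct (Z.leb_spec (lo0 + Z.of_nat (S a)) l0); destruct (Z.ltb_spec l0 (lo0 + Z.of_nat (S a) + Z.of_nat n));
      destruct (Z.leb_spec (lo0 + Z.of_nat a) l0); destruct (Z.ltb_spec l0 (lo0 + Z.of_nat a + Z.of_nat (S n)));
      simpl; try lra; lia.
Qed.

Theorem mainTheorem3 (b : nat) (G : Z) (c : config) :
  (2 <= b)%nat ->
  normalized b c ->
  (1 <= zcount c)%nat ->
  (Z.of_nat (zcount c) < 2 ^ Z.of_nat b)%Z ->
  Un_cv (fun n => reach b G c is_done n Outer) 1%R /\
  (forall l : Z,
      Un_cv (fun n => reach b G c (done_at l) n Outer) (W c l / sumW c)%R).
Proof.
  intros Hb Hn Hz _.
  assert (HP : (0 < powerRZ 2 G)%R) by (apply powerRZ_lt; lra).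
  assert (HM : (0 < rsum (fun i => W c (lo c + Z.of_nat i) * powerRZ 2 G) (seq 0 (Nlev c)))%R).
  { destruct (exists_level b c Hb Hn Hz) as [i0 [Hi0 Hs0]].
    apply Rlt_le_trans with (W c (lo c + Z.of_nat i0) * powerRZ 2 G)%R.
    - apply Rmult_lt_0_compat; auto. unfold W. apply Rmult_lt_0_compat; [apply IZR_lt; lia| apply powerRZ_lt; lra].
    - apply (rsum_ge_elem (fun i => W c (lo c + Z.of_nat i) * powerRZ 2 G)).
      + apply in_seq; lia.
      + intros; apply Rmult_le_pos; [apply (W_nonneg b); auto| lra]. }
  split.
  - pose proof (main_gen b G c is_done Hb Hn Hz) as H.
    erewrite (rsum_ext _ (fun i => W c (lo c + Z.of_nat i) * powerRZ 2 G)%R) in H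
      by (intros; unfold gval; simpl; ring).
    replace 1%R with (rsum (fun i => W c (lo c + Z.of_nat i) * powerRZ 2 G) (seq 0 (Nlev c))
       / rsum (fun i => W c (lo c + Z.of_nat i) * powerRZ 2 G) (seq 0 (Nlev c)))%R by (field; lra).
    exact H.
  - intros l. pose proof (main_gen b G c (done_at l) Hb Hn Hz) as H.
    erewrite (rsum_ext _ (fun i => (fun z => W c z * powerRZ 2 G) (lo c + Z.of_nat i)%Z *
       (if (lo c + Z.of_nat i =? l)%Z then 1 else 0))%R) in H
      by (intros; unfold gval; simpl; ring).
    rewrite (rsum_ind_sum (fun z => W c z * powerRZ 2 G)%R l (lo c)) in H. rewrite rsum_scal in H.
    assert (HsW : sumW c = rsum (fun i => W c (lo c + Z.of_nat i)) (seq 0 (Nlev c))) by reflexivity.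
    rewrite <- HsW in H. rewrite rsum_scal, <- HsW in HM.
    assert (Hsw : (0 < sumW c)%R) by (apply (Rmult_lt_reg_r (powerRZ 2 G)); lra).
    destruct ((lo c + Z.of_nat 0 <=? l) && (l <? lo c + Z.of_nat 0 + Z.of_nat (Nlev c)))%Z%bool eqn:E.
    + replace (W c l / sumW c)%R with (W c l * powerRZ 2 G / (sumW c * powerRZ 2 G))%R by (field; lra).
      exact H.
    + rewrite (W_zero c l).
      * replace (0 / sumW c)%R with (0 / (sumW c * powerRZ 2 G))%R by (field; lra). exact H.
      * apply SS_out. unfold in_levels. rewrite <- E. f_equal; f_equal; lia.
Qed.
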